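(* For integers $f \geq 1$, $\ell \geq 1$ and $q \geq 1$, let $N_q(f,\ell)$ be the number of numerical semigroups with Frobenius number $f$, multiplicity $\ell+1$, and depth $q$; for $j \geq 1$ let $S(j)$ be the number of numerical semigroups with multiplicity $j+1$ and Frobenius number $3j+2$. Then: (i) $N_2(f,\ell) = 2^{f-2-\ell}$ when $(f-1)/2 \leq \ell \leq f-2$; (ii) $N_3(f,\ell) = 2^{\ell - j} \cdot S(j)$ when $(f-2)/3 \leq \ell \leq (f-3)/2$, where $j = f - 2 - 2\ell$. For all other $\ell$, $N_2(f,\ell) = 0$ and $N_3(f,\ell) = 0$, respectively.
   Context: A numerical semigroup is a subset $\Lambda \subseteq \mathbb{N}_0$ containing $0$, closed under addition, with finite complement. Its multiplicity is $m(\Lambda) = \min(\Lambda \setminus \{0\})$, its conductor $c(\Lambda)$ is the least $c \in \mathbb{N}_0$ with $c + \mathbb{N}_0 \subseteq \Lambda$, its Frobenius number is $c(\Lambda)-1$, and its depth is $\lceil c(\Lambda)/m(\Lambda) \rceil$. *)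

(* Defs.v *)
From mathcomp Require Import all_boot.
From mathcomp Require Import boolp.
Set Implicit Arguments. Unset Strict Implicit. Unset Printing Implicit Defensive.

Definition numerical_semigroup (L : nat -> bool) : Prop :=
  [/\ L 0,
      (forall a b, L a -> L b -> L (a + b)) &
      exists c, forall n, c <= n -> L n].

Definition is_conductor (L : nat -> bool) (c : nat) : Prop :=
  (forall n, c <= n -> L n) /\
  (forall c', (forall n, c' <= n -> L n) -> c <= c').

Definition has_frobenius (L : nat -> bool) (f : nat) : Prop :=
  is_conductor L f.+1.

Definition is_multiplicity (L : nat -> bool) (m : nat) : Prop :=
  [/\ 0 < m, L m & forall k, 0 < k -> k < m -> ~~ L k].

Definition ceil_div (c m : nat) : nat := (c + m.-1) %/ m.

Definition has_depth (L : nat -> bool) (q : nat) : Prop :=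
  exists c m, [/\ is_conductor L c, is_multiplicity L m & q = ceil_div c m].

(* Every numerical semigroup with Frobenius number f contains every n > f,
   hence is determined by its trace A on {0,...,f}; conversely such a trace A
   gives the candidate set  embed f A = A u {n | n > f}. *)
Definition embed (f : nat) (A : {set 'I_f.+1}) : nat -> bool :=
  fun n => (f < n) || [exists i : 'I_f.+1, (i \in A) && (nat_of_ord i == n)].

Definition Nq (q f l : nat) : nat :=
  #|[set A : {set 'I_f.+1} |
      `[< numerical_semigroup (embed A) /\ has_frobenius (embed A) f /\
          is_multiplicity (embed A) l.+1 /\ has_depth (embed A) q >]]|.

Definition S (j : nat) : nat :=
  #|[set A : {set 'I_(3 * j + 2).+1} |
      `[< numerical_semigroup (embed A) /\ has_frobenius (embed A) (3 * j + 2) /\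
          is_multiplicity (embed A) j.+1 >]]|.

(* Main.v *)
Require Import Defs.
From mathcomp Require Import all_boot.
From mathcomp Require Import boolp zify.
Set Implicit Arguments. Unset Strict Implicit. Unset Printing Implicit Defensive.

Lemma char_gen (L : nat -> bool) m f : 0 < m -> (forall n, f < n -> L n) ->
  (numerical_semigroup L /\ has_frobenius L f /\ is_multiplicity L m) <->
  [/\ L 0, (forall i, 0 < i < m -> ~~ L i), L m, ~~ L f &
     (forall a b, m <= a -> m <= b -> a + b <= f -> L a -> L b -> L (a+b))].
Proof.
move=> m0 Hbig; split.
- move=> [[L0 Lad _] [[_ Hmin] [_ Lm Hlt]]]; split => //.
  + by move=> i /andP[i0 im]; apply: Hlt.
  + apply/negP => Lf.
    have := Hmin f => /(_ _) H.
    have : f.+1 <= f.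
      apply: H => n fn; case: (ltngtP f n) fn => // [/Hbig //|<- _ //].
    by rewrite ltnn.
  + by move=> a b _ _ _; apply: Lad.
- move=> [L0 Hlt Lm Lf Lad]; split; [split => //|split].
  + move=> a b La Lb.
    case: (posnP a) => [->//|a0]; case: (posnP b) => [->|b0]; first by rewrite addn0.
    case: (leqP (a + b) f) => [abf|]; last exact: Hbig.
    have am : m <= a by rewrite leqNgt; apply/negP => am; move: (Hlt a); rewrite a0 am La => /(_ isT).
    have bm : m <= b by rewrite leqNgt; apply/negP => bm; move: (Hlt b); rewrite b0 bm Lb => /(_ isT).
    exact: Lad.
  + by exists f.+1.
  + split; first by move=> n; apply: Hbig.
    move=> c' Hc; rewrite ltnNge; apply/negP => c'f.
    by move: Lf; rewrite Hc.
  + by split => // k k0 km; apply: Hlt; rewrite k0 km.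
Qed.

Lemma cond_uniq L c1 c2 : is_conductor L c1 -> is_conductor L c2 -> c1 = c2.
Proof.
move=> [H1 M1] [H2 M2]; apply/eqP; rewrite eqn_leq; apply/andP; split.
exact: M1. exact: M2.
Qed.

Lemma mult_uniq L m1 m2 : is_multiplicity L m1 -> is_multiplicity L m2 -> m1 = m2.
Proof.
move=> [p1 L1 H1] [p2 L2 H2]; case: (ltngtP m1 m2) => // h.
  by move: (H2 m1 p1 h); rewrite L1.
by move: (H1 m2 p2 h); rewrite L2.
Qed.

Lemma depthE L f m q : has_frobenius L f -> is_multiplicity L m ->
  (has_depth L q <-> q = ceil_div f.+1 m).
Proof.
move=> Hf Hm; split.
- by move=> [c [m' [Hc Hm' ->]]]; rewrite (cond_uniq Hc Hf) (mult_uniq Hm' Hm).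
- by move=> ->; exists f.+1, m.
Qed.

Lemma divn_eqP n d q : 0 < d -> (n %/ d = q <-> q * d <= n < q.+1 * d).
Proof.
move=> d0; rewrite -leq_divRL // -ltn_divLR // ltnS -eqn_leq.
by split => [->|/eqP].
Qed.

Lemma ceilE f l q : (ceil_div f.+1 l.+1 = q) <-> q * l.+1 <= f + l.+1 < q.+1 * l.+1.
Proof. rewrite /ceil_div /= -divn_eqP //; have -> : f.+1 + l = f + l.+1 by lia. by []. Qed.

Section Emb.
Variable f : nat.
Lemma embed_big (A : {set 'I_f.+1}) n : f < n -> embed A n.
Proof. by rewrite /embed => ->. Qed.
Lemma embed_ord (A : {set 'I_f.+1}) (i : 'I_f.+1) : embed A i = (i \in A).
Proof.
rewrite /embed ltnNge -ltnS ltn_ord /=; apply/existsP/idP.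
  by move=> [i' /andP[Hi /eqP e]]; move: Hi; rewrite (val_inj e).
by move=> Hi; exists i; rewrite Hi eqxx.
Qed.
Lemma embed_le (A : {set 'I_f.+1}) n : n <= f -> embed A n = (inord n \in A).
Proof. by move=> nf; rewrite -embed_ord inordK. Qed.
End Emb.
Lemma card_free (T : finType) (F D : {set T}) (P : {set T} -> Prop) :
  D :&: F = set0 ->
  (forall A, P A <-> (forall i, i \notin F -> (i \in A) = (i \in D))) ->
  #|[set A | `[< P A >]]| = 2 ^ #|F|.
Proof.
move=> DF HP.
have -> : [set A | `[< P A >]] = (fun C => C :|: D) @: powerset F.
  apply/setP => A; rewrite inE; apply/asboolP/imsetP.
  - move/HP => H; exists (A :&: F); first by rewrite inE subsetIr.
    apply/setP => i; rewrite !inE; case: (boolP (i \in F)) => iF.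
      by rewrite andbT; case: (boolP (i \in A)) => //= _; apply/esym/negP => iD;
         move/setP: DF => /(_ i); rewrite !inE iD iF.
    by rewrite andbF H.
  - move=> [C]; rewrite inE => CF ->; apply/HP => i iF; rewrite inE.
    by have -> : (i \in C) = false by apply/negP => iC; move/subsetP: CF => /(_ i iC); rewrite (negbTE iF).
rewrite card_in_imset ?card_powerset // => C1 C2; rewrite !inE => C1F C2F e.
apply/setP => i; move/setP: e => /(_ i); rewrite !inE.
case: (boolP (i \in F)) => iF.
  have -> : (i \in D) = false by apply/negP => iD; move/setP: DF => /(_ i); rewrite !inE iD iF.
  by rewrite !orbF.
have -> : (i \in C1) = false by apply/negP => iC; move/subsetP: C1F => /(_ i iC); rewrite (negbTE iF).
by have -> : (i \in C2) = false by apply/negP => iC; move/subsetP: C2F => /(_ i iC); rewrite (negbTE iF).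
Qed.

Lemma card_interval n a b : b <= n ->
  #|[set i : 'I_n | a < i < b]| = b - a.+1.
Proof.
move=> bn.
have -> : #|[set i : 'I_n | a < i < b]| = count (fun k => a < k < b) (iota 0 n).
  rewrite cardE -val_enum_ord count_map size_filter enumT; apply: eq_count => i /=; by rewrite inE.

have c0 : forall s, {in s, forall k, ~~ (a < k < b)} -> count (fun k => a < k < b) s = 0.
  move=> s Hs; apply/eqP; rewrite -leqn0 leqNgt -has_count; apply/hasPn => k /Hs //.
have c1 : forall s, {in s, forall k, (a < k < b)} -> count (fun k => a < k < b) s = size s.
  move=> s Hs; apply/eqP; rewrite -all_count; apply/allP => k /Hs //.
case: (leqP b a.+1) => ba.
  rewrite c0; try lia. by move=> k _; apply/negP => /andP [h1 h2]; lia.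
have -> : n = a.+1 + (b - a.+1) + (n - b) by lia.
rewrite !iotaD !count_cat add0n.
rewrite (c0 (iota 0 a.+1)) ?(c1 (iota a.+1 _)) ?(c0 (iota (0 + _) (n - b))) ?size_iota; try lia.
all: move=> k; rewrite mem_iota => Hk; try (apply/negP => /andP [h3 h4]); try (apply/andP; split); lia.
Qed.
Definition Good (m j : nat) (L : nat -> bool) : Prop :=
 [/\ L 0, (forall i, 0 < i < m -> ~~ L i), L m, ~~ L (2*m+j) &
  (forall x y, x + y <= j -> L (m+x) -> L (m+y) -> L (2*m+x+y))].

Definition hh m j n :=
  if n <= j then n else if n <= j.*2.+1 then n + (m - j.+1) else n + 2 * (m - j.+1).

Lemma hh_small m j i : i <= j -> hh m j i = i.
Proof. by move=> h; rewrite /hh h. Qed.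

Lemma hh_mid m j x : j < m -> x <= j -> hh m j (j.+1 + x) = m + x.
Proof.
move=> jm xj; rewrite /hh ifF; last by apply/negbTE; rewrite -ltnNge; lia.
rewrite ifT; lia.
Qed.

Lemma hh_top m j x : j < m -> x <= j -> hh m j (2 * j.+1 + x) = 2 * m + x.
Proof.
move=> jm xj; rewrite /hh ifF; last by apply/negbTE; rewrite -ltnNge; lia.
rewrite ifF; last by apply/negbTE; rewrite -ltnNge; lia.
lia.
Qed.

Lemma transfer m j (L L' : nat -> bool) : j < m ->
  (forall n, n <= 3 * j + 2 -> L' n = L (hh m j n)) ->
  (Good m j L <-> Good j.+1 j L' /\ (forall i, j < i < m -> ~~ L i)).
Proof.
move=> jm HL.
have eS : forall i, i <= j -> L' i = L i.
  by move=> i ij; rewrite HL ?hh_small //; lia.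
have eM : forall x, x <= j -> L' (j.+1 + x) = L (m + x).
  by move=> x xj; rewrite HL ?hh_mid //; lia.
have eT : forall x, x <= j -> L' (2 * j.+1 + x) = L (2 * m + x).
  by move=> x xj; rewrite HL ?hh_top //; lia.
split.
- move=> [L0 Hlt Lm Lf Cl]; split; last first.
    by move=> i /andP [h1 h2]; apply: Hlt; apply/andP; split; lia.
  split.
  + by rewrite eS.
  + move=> i /andP [h1 h2]; rewrite eS; last lia.
    by apply: Hlt; apply/andP; split; lia.
  + by rewrite -[j.+1]addn0 eM // addn0.
  + by rewrite eT.
  + move=> x y xy; rewrite eM; last lia; rewrite eM; last lia.
    rewrite -addnA eT; last lia. rewrite addnA; exact: Cl.
- move=> [[L0 Hlt Lm Lf Cl] Hmid]; split.
  + by rewrite -eS.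
  + move=> i /andP [h1 h2]; case: (leqP i j) => ij.
      by rewrite -eS //; apply: Hlt; apply/andP; split; lia.
    by apply: Hmid; apply/andP; split; lia.
  + by rewrite -[m]addn0 -eM // addn0.
  + by rewrite -eT.
  + move=> x y xy; rewrite -eM; last lia; rewrite -eM; last lia.
    rewrite -addnA -eT; last lia. rewrite addnA; exact: Cl.
Qed.

Lemma char3 (L : nat -> bool) m j f : 0 < m -> j < m -> f = 2*m+j -> (forall n, f < n -> L n) ->
  (numerical_semigroup L /\ has_frobenius L f /\ is_multiplicity L m) <-> Good m j L.
Proof.
move=> m0 jm ef Hb; rewrite char_gen //; split.
- move=> [L0 Hlt Lm Lf Cl]; split => //; first by rewrite -ef.
  move=> x y xy Lx Ly; have -> : 2*m+x+y = (m+x)+(m+y) by lia.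
  apply: Cl => //; lia.
- move=> [L0 Hlt Lm Lf Cl]; split => //; first by rewrite ef.
  move=> a b am bm ab La Lb.
  have := Cl (a-m) (b-m); rewrite !subnKC // => /(_ _ La Lb).
  have -> : a+b = 2*m+(a-m)+(b-m) by lia.
  by apply; lia.
Qed.

Section Bij.
Variables (m j f f' : nat).
Hypotheses (jm : j < m) (ef : f = 2 * m + j) (ef' : f' = 3 * j + 2).

Definition gg i := if i <= j then i else if i <= m + j then i - (m - j.+1) else i - 2*(m - j.+1).
Definition inImg i := (i <= j) || ((m <= i) && (i <= m+j)) || (2*m <= i).

Lemma hh_cases n : [\/ n <= j /\ hh m j n = n,
   j < n <= j.*2.+1 /\ hh m j n = n + (m - j.+1) |
   j.*2.+1 < n /\ hh m j n = n + 2 * (m - j.+1)].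
Proof.
rewrite /hh; case: (leqP n j) => h1; first by constructor 1.
case: (leqP n j.*2.+1) => h2; first by constructor 2; split => //; lia.
by constructor 3.
Qed.

Lemma gg_cases i : [\/ i <= j /\ gg i = i,
   j < i <= m + j /\ gg i = i - (m - j.+1) |
   m + j < i /\ gg i = i - 2 * (m - j.+1)].
Proof.
rewrite /gg; case: (leqP i j) => h1; first by constructor 1.
case: (leqP i (m + j)) => h2; first by constructor 2; split => //; lia.
by constructor 3.
Qed.

Lemma hh_le n : n <= f' -> hh m j n <= f.
Proof. by case: (hh_cases n) => [] [h ->]; lia. Qed.
Lemma hh_img n : n <= f' -> inImg (hh m j n).
Proof. by rewrite /inImg; case: (hh_cases n) => [] [h ->]; lia. Qed.
Lemma gg_hh n : n <= f' -> gg (hh m j n) = n.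
Proof. by move=> hn; case: (hh_cases n) => [] [h e]; case: (gg_cases (hh m j n)) => [] [h' e']; lia. Qed.
Lemma hh_notF n : n <= f' -> ~~ (m + j < hh m j n < 2 * m).
Proof. by case: (hh_cases n) => [] [h ->]; lia. Qed.
Lemma gg_le i : i <= f -> inImg i -> gg i <= f'.
Proof. by rewrite /inImg; case: (gg_cases i) => [] [h ->]; lia. Qed.
Lemma hh_gg i : i <= f -> inImg i -> hh m j (gg i) = i.
Proof.
rewrite /inImg => h0 h1; case: (gg_cases i) => [] [h e];
  case: (hh_cases (gg i)) => [] [h' e']; lia.
Qed.
Lemma img_notF i : inImg i -> ~~ (m + j < i < 2 * m).
Proof. rewrite /inImg; lia. Qed.
Lemma notImg i : i <= f -> ~~ inImg i -> ~~ (m + j < i < 2 * m) -> j < i < m.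
Proof. rewrite /inImg; lia. Qed.


Definition SA := [set A : {set 'I_f.+1} | `[< Good m j (embed A) >]].
Definition SB := [set B : {set 'I_f'.+1} | `[< Good j.+1 j (embed B) >]].
Definition F3 := [set i : 'I_f.+1 | m + j < i < 2 * m].
Definition phiB (A : {set 'I_f.+1}) : {set 'I_f'.+1} := [set n : 'I_f'.+1 | embed A (hh m j n)].
Definition psi (p : {set 'I_f'.+1} * {set 'I_f.+1}) : {set 'I_f.+1} :=
  p.2 :|: [set i : 'I_f.+1 | inImg i && embed p.1 (gg i)].
Definition phi A := (phiB A, A :&: F3).

Lemma embed_phiB A n : n <= f' -> embed (phiB A) n = embed A (hh m j n).
Proof. by move=> nf; rewrite embed_le // inE inordK. Qed.

Lemma embed_psi (p : {set 'I_f'.+1} * {set 'I_f.+1}) n : p.2 \subset F3 -> n <= f' ->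
  embed (psi p) (hh m j n) = embed p.1 n.
Proof.
move=> sub nf; have hf := hh_le nf.
rewrite embed_le // !inE inordK // hh_img // gg_hh //=.
case: (boolP (inord (hh m j n) \in p.2)) => //= Hin.
move/subsetP: sub => /(_ _ Hin); rewrite inE inordK //.
by move: (hh_notF nf) => /negbTE ->.
Qed.

Lemma phi_in A : A \in SA -> phi A \in setX SB (powerset F3).
Proof.
rewrite !inE => /asboolP H; rewrite subsetIr andbT; apply/asboolP.
have [G1 _] := (transfer (L := embed A) (L' := embed (phiB A)) jm
   (fun n hn => @embed_phiB A n ltac:(by rewrite ef'))).1 H.
exact: G1.
Qed.

Lemma psi_in p : p \in setX SB (powerset F3) -> psi p \in SA.
Proof.
case: p => B C; rewrite !inE /= => /andP [/asboolP HB sub]; apply/asboolP.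
apply/(transfer (L := embed (psi (B, C))) (L' := embed B) jm).
  by move=> n hn; rewrite embed_psi // ef'.
split => // i /andP [h1 h2].
rewrite embed_le; last lia.
rewrite !inE inordK; last lia.
have -> : (inord i \in C) = false.
  apply/negP => Hin; move/subsetP: sub => /(_ _ Hin); rewrite inE inordK; lia.
rewrite /inImg; lia.
Qed.

Lemma phiK : {in SA, cancel phi psi}.
Proof.
move=> A; rewrite inE => /asboolP [L0 Hlt Lm Lf Cl].
apply/setP => i; rewrite !inE /=.
have hi : i <= f by rewrite -ltnS.
case: (boolP (inImg i)) => Hi /=.
  rewrite (negbTE (img_notF Hi)) andbF /= embed_phiB ?gg_le // hh_gg //.
  by rewrite embed_ord.
rewrite orbF; apply/idP/idP => [/and3P [] //|Hin].
case: (boolP (m + j < i < 2 * m)) => HF; first by rewrite Hin.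
have := notImg hi Hi HF => h.
have := Hlt i; rewrite embed_ord Hin => H; exfalso.
have : 0 < i < m by lia.
by move/H.
Qed.

Lemma psiK : {in setX SB (powerset F3), cancel psi phi}.
Proof.
move=> [B C]; rewrite !inE /= => /andP [_ sub].
rewrite /phi; congr pair.
  apply/setP => n; rewrite inE embed_psi //; last by rewrite -ltnS.
  by rewrite embed_ord.
apply/setP => i; rewrite !inE.
case: (boolP (m + j < i < 2 * m)) => HF; rewrite ?andbT ?andbF.
  rewrite /=; case: (boolP (inImg i)) => Hi; last by rewrite andFb orbF.
  by move: (img_notF Hi); rewrite HF.
apply/esym/negP => Hin; move/subsetP: sub => /(_ _ Hin); rewrite inE.
by rewrite (negbTE HF).
Qed.

Lemma card_SA : #|SA| = #|SB| * 2 ^ (m - j.+1).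
Proof.
rewrite -(card_in_imset (can_in_inj phiK)).
have -> : phi @: SA = setX SB (powerset F3).
  apply/eqP; rewrite eqEsubset; apply/andP; split.
    by apply/subsetP => p /imsetP [A HA ->]; apply: phi_in.
  apply/subsetP => p Hp; rewrite -(psiK Hp); apply: imset_f; exact: psi_in.
rewrite cardsX card_powerset /F3 card_interval; last by lia.
congr (_ * 2 ^ _); lia.
Qed.

End Bij.

Definition PP (f l q : nat) (A : {set 'I_f.+1}) : Prop :=
  numerical_semigroup (embed A) /\ has_frobenius (embed A) f /\
  is_multiplicity (embed A) l.+1 /\ has_depth (embed A) q.

Lemma PP_iff f l q (A : {set 'I_f.+1}) : PP l q A <->
  [/\ embed A 0, (forall i, 0 < i < l.+1 -> ~~ embed A i), embed A l.+1, ~~ embed A f &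
     (forall a b, l.+1 <= a -> l.+1 <= b -> a + b <= f -> embed A a -> embed A b -> embed A (a+b))]
   /\ q * l.+1 <= f + l.+1 < q.+1 * l.+1.
Proof.
rewrite /PP; split.
- move=> [Hs [Hf [Hm Hd]]].
  have [L0 Hlt Lm Lf Cl] := (char_gen (L := embed A) (m := l.+1) (f := f) isT (@embed_big f A)).1 (conj Hs (conj Hf Hm)).
  split => //; apply/ceilE; symmetry; exact/(depthE _ Hf Hm).
- move=> [[L0 Hlt Lm Lf Cl] Hc].
  have [Hs [Hf Hm]] := (char_gen (L := embed A) (m := l.+1) (f := f) isT (@embed_big f A)).2 (And5 L0 Hlt Lm Lf Cl).
  do 3 (split => //); apply/(depthE _ Hf Hm); symmetry; exact/ceilE.
Qed.

Lemma Nq_zero q f l : (forall A : {set 'I_f.+1}, ~ PP l q A) -> Nq q f l = 0.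
Proof.
move=> H; rewrite /Nq; apply/eqP; rewrite cards_eq0; apply/eqP/setP => A.
by rewrite inE in_set0; apply/negbTE/asboolPn; apply: H.
Qed.

Unset Implicit Arguments.

Theorem proposition2p10 (f l : nat) (hf : 1 <= f) (hl : 1 <= l) :
  ((f - 1 <= 2 * l /\ l <= f - 2) -> Nq 2 f l = 2 ^ (f - 2 - l)) /\
  (~ (f - 1 <= 2 * l /\ l <= f - 2) -> Nq 2 f l = 0) /\
  ((f - 2 <= 3 * l /\ 2 * l <= f - 3) ->
     Nq 3 f l = 2 ^ (l - (f - 2 - 2 * l)) * S (f - 2 - 2 * l)) /\
  (~ (f - 2 <= 3 * l /\ 2 * l <= f - 3) -> Nq 3 f l = 0).
Proof.
split; [|split; [|split]].
- move=> [h1 h2].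
  rewrite /Nq (@card_free _ [set i : 'I_f.+1 | l.+1 < i < f]
      [set i : 'I_f.+1 | (i == 0 :> nat) || (i == l.+1 :> nat)] (PP l 2)).
  + rewrite card_interval //; congr (2 ^ _); lia.
  + apply/setP => i; rewrite !inE; apply/negbTE; lia.
  + move=> A; rewrite PP_iff; split.
    * move=> [[L0 Hlt Lm Lf Cl] _] i; rewrite !inE -embed_ord => hi.
      have := ltn_ord i; rewrite ltnS => hif.
      have [->|i0] := eqVneq (i : nat) 0; first by rewrite L0.
      have [->|im] := eqVneq (i : nat) l.+1; first by rewrite Lm.
      rewrite /=; apply/negbTE.
      case: (ltnP (i : nat) l.+1) => hil; first by apply: Hlt; lia.
      have -> : (i : nat) = f by lia.
      exact: Lf.
    * move=> H.
      have E : forall n, n <= f -> ~~ (l.+1 < n < f) -> embed A n = (n == 0) || (n == l.+1).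
        move=> n hn hF; rewrite embed_le // H; first by rewrite inE inordK.
        by rewrite inE inordK.
      split; last by lia.
      split.
      -- by rewrite E.
      -- by move=> i hi; rewrite E; lia.
      -- by rewrite E //; lia.
      -- by rewrite E //; lia.
      -- by move=> a b ha hb hab; lia.
- move=> hn; apply: Nq_zero => A /PP_iff [[L0 Hlt Lm Lf Cl] hc]; apply: hn.
  case: (eqVneq f l.+1) => e; first by move: Lm; rewrite -e (negbTE Lf).
  lia.
- move=> [h1 h2].
  set j := f - 2 - 2 * l.
  have jm : j < l.+1 by rewrite /j; lia.
  have ef : f = 2 * l.+1 + j by rewrite /j; lia.
  have -> : Nq 3 f l = #|SA l.+1 j f|.
    apply: eq_card => A; rewrite !inE; apply: asbool_equiv_eq.
    apply: (@iff_trans _ (PP l 3 A)); first done.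
    rewrite PP_iff -(char3 (L := embed A) (m := l.+1) (j := j) (f := f) isT jm ef (@embed_big f A)).
    rewrite (char_gen (L := embed A) (m := l.+1) (f := f) isT (@embed_big f A)).
    split; [by case|move=> H; split => //; lia].
  have -> : S j = #|SB j (3 * j + 2)|.
    apply: eq_card => B; rewrite !inE; apply: asbool_equiv_eq.
    by apply: char3 => //; [lia | apply: embed_big].
  rewrite (card_SA jm ef (erefl _)) mulnC; congr (2 ^ _ * _); lia.
- move=> hn; apply: Nq_zero => A /PP_iff [[L0 Hlt Lm Lf Cl] hc]; apply: hn.
  case: (eqVneq f (2 * l.+1)) => e.
    have L2 := Cl l.+1 l.+1 (leqnn _) (leqnn _) ltac:(lia) Lm Lm.
    have e' : l.+1 + l.+1 = f by lia.
    by move: L2; rewrite e' (negbTE Lf).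
  lia.
Qed.
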